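(* Let $n\ge2$ be even. For $q>0$, let $\omega=(nq,\ldots,nq,-nq,\ldots,-nq)\in\mathbb{R}^n$ (with $n/2$ entries equal to $nq$ and $n/2$ entries equal to $-nq$) and $k=(n,\ldots,n)$. The maximum over $q>0$ of the number of distinct equilibria $\theta\in(-\pi,\pi]^n$ satisfying $$\omega_\nu=\frac1n\sum_{\mu=1}^nk_\nu k_\mu\sin(\theta_\nu-\theta_\mu)\ (\nu=1,\ldots,n),\qquad \sum_{\mu=1}^nk_\mu e^{i\theta_\mu}\in\mathbb{R}_{\ge0},$$ is $2^n-\binom{n}{n/2}$, and this maximum is attained for every $0<q<1$. *)

(* Defs.v *)
From Stdlib Require Import Reals Arith.
Open Scope R_scope.

Fixpoint rsum (n : nat) (f : nat -> R) : R :=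
  match n with
  | O => 0
  | S m => rsum m f + f m
  end.

Fixpoint binom (n k : nat) : nat :=
  match n, k with
  | _, O => 1
  | O, S _ => 0
  | S n', S k' => binom n' k' + binom n' k
  end.

(* Indices nu = 0..n-1 stand for 1..n.  omega has n/2 entries n*q then n/2 entries -n*q. *)
Definition omega (n : nat) (q : R) (nu : nat) : R :=
  if Nat.ltb nu (Nat.div n 2) then INR n * q else - (INR n * q).

Definition kvec (n : nat) (mu : nat) : R := INR n.

Definition is_equilibrium (n : nat) (om k : nat -> R) (theta : nat -> R) : Prop :=
  (forall nu, (nu < n)%nat -> - PI < theta nu <= PI) /\
  (forall nu, (nu < n)%nat ->
     om nu = / INR n * rsum n (fun mu => k nu * k mu * sin (theta nu - theta mu))) /\
  rsum n (fun mu => k mu * sin (theta mu)) = 0 /\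
  0 <= rsum n (fun mu => k mu * cos (theta mu)).

Definition distinct_pt (n : nat) (t1 t2 : nat -> R) : Prop :=
  exists nu, (nu < n)%nat /\ t1 nu <> t2 nu.

Definition distinct_equilibria (n : nat) (om k : nat -> R) (m : nat)
  (F : nat -> nat -> R) : Prop :=
  (forall j, (j < m)%nat -> is_equilibrium n om k (F j)) /\
  (forall i j, (i < m)%nat -> (j < m)%nat -> i <> j -> distinct_pt n (F i) (F j)).

(* Main.v *)
Require Import Defs.
From Stdlib Require Import Reals Arith Lra Lia List Classical.
Open Scope R_scope.

Lemma rsum_ext n f g : (forall i, (i < n)%nat -> f i = g i) -> rsum n f = rsum n g.
Proof. induction n; simpl; intros H; auto. rewrite IHn by (intros; apply H; lia). rewrite H by lia. auto. Qed.

Lemma rsum_scal n a f : rsum n (fun i => a * f i) = a * rsum n f.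
Proof. induction n; simpl; [ring| rewrite IHn; ring]. Qed.

Lemma rsum_minus n f g : rsum n (fun i => f i - g i) = rsum n f - rsum n g.
Proof. induction n; simpl; [ring| rewrite IHn; ring]. Qed.

Fixpoint cntl (l : list bool) : nat :=
  match l with nil => 0%nat | b :: l => ((if b then 1 else 0) + cntl l)%nat end.
Definition cnt (g : nat -> bool) n := cntl (map g (seq 0 n)).

Lemma cntl_app l1 l2 : cntl (l1 ++ l2) = (cntl l1 + cntl l2)%nat.
Proof. induction l1; simpl; auto. rewrite IHl1; lia. Qed.

Lemma cnt_S g n : cnt g (S n) = (cnt g n + if g n then 1 else 0)%nat.
Proof. unfold cnt. rewrite seq_S, map_app, cntl_app. simpl. lia. Qed.

Lemma cnt_ext g g' n : (forall i, (i<n)%nat -> g i = g' i) -> cnt g n = cnt g' n.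
Proof. induction n; intros H; auto. rewrite !cnt_S, IHn by (intros; apply H; lia). rewrite H by lia. auto. Qed.

Lemma cnt_le g n : (cnt g n <= n)%nat.
Proof. induction n; auto. rewrite cnt_S. destruct (g n); lia. Qed.

Lemma cnt_neg g n : (cnt (fun i => negb (g i)) n + cnt g n = n)%nat.
Proof. induction n; auto. rewrite !cnt_S. destruct (g n) eqn:E; simpl; rewrite ?E; simpl; lia. Qed.

Lemma cnt_xor b g n : cnt (fun i => xorb b (g i)) n = if b then (n - cnt g n)%nat else cnt g n.
Proof.
  destruct b; simpl.
  - pose proof (cnt_neg g n). rewrite (cnt_ext _ (fun i => negb (g i))) by (intros; destruct (g i); auto). lia.
  - apply cnt_ext; intros; auto.
Qed.

Lemma cnt_lt h n : cnt (fun i => Nat.ltb i h) n = Nat.min n h.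
Proof.
  induction n; auto. rewrite cnt_S, IHn.
  destruct (Nat.ltb n h) eqn:E; [apply Nat.ltb_lt in E | apply Nat.ltb_ge in E]; lia.
Qed.

Lemma rsum_pm (g : nat -> bool) (a : R) n : rsum n (fun i => if g i then a else - a) = a * (2 * INR (cnt g n) - INR n).
Proof.
  induction n. unfold cnt; simpl; ring.
  cbn [rsum]. rewrite IHn, cnt_S, plus_INR, (S_INR n). destruct (g n); simpl; ring.
Qed.

Lemma nth_map_seq (A : Type) (f : nat -> A) n nu d : (nu < n)%nat -> nth nu (map f (seq 0 n)) d = f nu.
Proof.
  intros H. rewrite (nth_indep (map f (seq 0 n)) d (f 0%nat)) by (rewrite length_map, length_seq; auto).
  rewrite map_nth, seq_nth by auto. auto.
Qed.

Lemma map_nth_seq_self (b : list bool) n : length b = n -> map (fun nu => nth nu b false) (seq 0 n) = b.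
Proof.
  intros H. apply nth_ext with (d := false) (d' := false).
  rewrite length_map, length_seq; auto.
  intros k Hk. rewrite length_map, length_seq in Hk. rewrite nth_map_seq; auto.
Qed.

Fixpoint all_lists n : list (list bool) :=
  match n with 0%nat => nil :: nil
  | S n => map (cons false) (all_lists n) ++ map (cons true) (all_lists n) end.

Lemma all_lists_len n : length (all_lists n) = (2^n)%nat.
Proof. induction n; simpl; auto. rewrite length_app, !length_map, IHn. lia. Qed.

Lemma in_all_lists n l : length l = n -> In l (all_lists n).
Proof.
  revert l; induction n; intros l H; destruct l; simpl in *; try lia; auto.
  apply in_or_app. destruct b; [right|left]; apply in_map; apply IHn; lia.
Qed.

Lemma all_lists_in n l : In l (all_lists n) -> length l = n.
Proof.
  revert l; induction n; intros l H; simpl in *. destruct H as [H|[]]; subst; auto.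
  apply in_app_or in H. destruct H as [H|H]; apply in_map_iff in H; destruct H as [x [<- Hx]];
  simpl; rewrite (IHn x); auto.
Qed.

Lemma NoDup_map_cons (b : bool) l : NoDup l -> NoDup (map (cons b) l).
Proof.
  induction 1; simpl; constructor; auto.
  intros Hin. apply in_map_iff in Hin. destruct Hin as [y [Hy Hy']]. inversion Hy; subst; auto.
Qed.

Lemma NoDup_all_lists n : NoDup (all_lists n).
Proof.
  induction n; simpl. constructor; [intros []|constructor].
  apply NoDup_app; try apply NoDup_map_cons; auto.
  intros a H1 H2. apply in_map_iff in H1, H2.
  destruct H1 as [x [<- _]]. destruct H2 as [y [Hy _]]. discriminate.
Qed.

Lemma filter_false (A : Type) (l : list A) : filter (fun _ => false) l = nil.
Proof. induction l; auto. Qed.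

Lemma count_all_lists n k :
  length (filter (fun l => Nat.eqb (cntl l) k) (all_lists n)) = binom n k.
Proof.
  revert k; induction n; intros k.
  - destruct k; simpl; auto.
  - simpl. rewrite filter_app, length_app, !filter_map_swap, !length_map.
    simpl. destruct k.
    + rewrite filter_false. simpl. rewrite IHn. destruct n; simpl; lia.
    + rewrite !IHn. lia.
Qed.

Lemma filter_compl (A : Type) (f : A -> bool) l :
  (length (filter f l) + length (filter (fun x => negb (f x)) l) = length l)%nat.
Proof. induction l; simpl; auto. destruct (f a); simpl; lia. Qed.

Lemma angle_eq a b : -PI < a <= PI -> -PI < b <= PI -> sin a = sin b -> cos a = cos b -> a = b.
Proof.
  intros Ha Hb Hs Hc.
  assert (H1 : cos (a - b) = 1).
  { rewrite cos_minus, <- Hs, <- Hc. pose proof (sin2_cos2 a). unfold Rsqr in *. lra. }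
  set (x := (a - b) / 2).
  assert (Hx : a - b = 2 * x) by (unfold x; field).
  rewrite Hx, cos_2a_sin in H1.
  assert (Hsx : sin x = 0) by nra.
  destruct (Rtotal_order x 0) as [Hl|[He|Hg]].
  - assert (0 < sin (- x)) by (apply sin_gt_0; unfold x in *; lra).
    rewrite sin_neg in H. lra.
  - lra.
  - assert (0 < sin x) by (apply sin_gt_0; unfold x in *; lra). lra.
Qed.

Lemma sq_eq x y : 0 <= x -> 0 <= y -> x * x = y * y -> x = y.
Proof. intros. nra. Qed.

Lemma sc_unique s c s' c' : 0 < s -> 0 < c -> 0 < s' -> 0 < c' ->
  s*s + c*c = 1 -> s'*s' + c'*c' = 1 -> s * c = s' * c' -> (c < s <-> c' < s') ->
  s = s' /\ c = c'.
Proof.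
  intros. assert (E1 : s + c = s' + c') by (apply sq_eq; nra).
  destruct (Rlt_dec c s).
  - assert (c' < s') by tauto.
    assert (s - c = s' - c') by (apply sq_eq; nra). lra.
  - assert (~ c' < s') by tauto.
    assert (c - s = c' - s') by (apply sq_eq; nra). lra.
Qed.

Lemma omega_sum n th nu :
  rsum n (fun mu => kvec n nu * kvec n mu * sin (th nu - th mu)) =
  INR n * INR n * (sin (th nu) * rsum n (fun mu => cos (th mu)) - cos (th nu) * rsum n (fun mu => sin (th mu))).
Proof.
  unfold kvec.
  rewrite (rsum_ext _ _ (fun mu => (INR n * INR n * sin (th nu)) * cos (th mu) - (INR n * INR n * cos (th nu)) * sin (th mu))).
  rewrite rsum_minus, !rsum_scal. ring.
  intros; rewrite sin_minus; ring.
Qed.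

Definition posb (x : R) : bool := if Rlt_dec 0 x then true else false.
Definition bitf (th : nat -> R) : bool :=
  if Rlt_dec (cos (th 0%nat) ^ 2) (sin (th 0%nat) ^ 2) then true else false.
Definition code (n : nat) (th : nat -> R) : list bool :=
  map (fun nu => xorb (bitf th) (posb (cos (th nu)))) (seq 0 n).

Lemma equil_struct n h q th : n = (2 * h)%nat -> (1 <= h)%nat -> Nat.div n 2 = h -> 0 < q ->
  is_equilibrium n (omega n q) (kvec n) th ->
  exists s c, 0 < s /\ 0 < c /\ s * s + c * c = 1 /\
   (forall nu, (nu < n)%nat -> sin (th nu) = if Nat.ltb nu h then s else - s) /\
   (forall nu, (nu < n)%nat -> cos (th nu) = if posb (cos (th nu)) then c else - c) /\
   (h < cnt (fun nu => posb (cos (th nu))) n)%nat /\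
   s * c * (2 * INR (cnt (fun nu => posb (cos (th nu))) n) - INR n) = q /\
   (bitf th = true <-> c < s).
Proof.
  intros Hn Hh Hd Hq [Hr [Hw [Hs Hc]]].
  unfold kvec in Hs, Hc. rewrite rsum_scal in Hs, Hc.
  set (C := rsum n (fun mu => cos (th mu))) in *.
  set (S := rsum n (fun mu => sin (th mu))) in *.
  assert (Hnpos : 0 < INR n) by (apply lt_0_INR; lia).
  assert (HS : S = 0) by (apply Rmult_integral in Hs; destruct Hs; lra).
  assert (HC : 0 <= C) by nra.
  assert (Key : forall nu, (nu < n)%nat -> sin (th nu) * C = if Nat.ltb nu h then q else - q).
  { intros nu Hnu. specialize (Hw nu Hnu). rewrite omega_sum in Hw. fold C S in Hw.
    rewrite HS in Hw. unfold omega in Hw. rewrite Hd in Hw.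
    replace (/ INR n * (INR n * INR n * (sin (th nu) * C - cos (th nu) * 0)))
      with (INR n * (sin (th nu) * C)) in Hw by (field; lra).
    destruct (Nat.ltb nu h); apply (Rmult_eq_reg_l (INR n)); lra. }
  assert (K0 := Key 0%nat ltac:(lia)).
  assert (E0 : Nat.ltb 0 h = true) by (apply Nat.ltb_lt; lia).
  rewrite E0 in K0.
  assert (HCp : 0 < C) by (destruct HC as [HC|HC]; auto; rewrite <- HC in K0; lra).
  set (s := sin (th 0%nat)) in *.
  assert (Hsp : 0 < s) by nra.
  assert (Hsin : forall nu, (nu < n)%nat -> sin (th nu) = if Nat.ltb nu h then s else - s).
  { intros nu Hnu. specialize (Key nu Hnu). destruct (Nat.ltb nu h);
    apply (Rmult_eq_reg_r C); lra. }
  set (c := Rabs (cos (th 0%nat))).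
  assert (Hc2 : c * c = cos (th 0%nat) * cos (th 0%nat)).
  { unfold c. rewrite <- Rabs_mult. apply Rabs_right. nra. }
  assert (Hcge : 0 <= c) by apply Rabs_pos.
  assert (Hcos : forall nu, (nu < n)%nat -> cos (th nu) = if posb (cos (th nu)) then c else - c).
  { intros nu Hnu.
    assert (cos (th nu) * cos (th nu) = c * c).
    { pose proof (sin2_cos2 (th nu)). pose proof (sin2_cos2 (th 0%nat)). unfold Rsqr in *.
      rewrite Hsin in H by auto. fold s in H0. destruct (Nat.ltb nu h); nra. }
    unfold posb. destruct (Rlt_dec 0 (cos (th nu))); nra. }
  set (P := cnt (fun nu => posb (cos (th nu))) n).
  assert (HCe : C = c * (2 * INR P - INR n)).
  { unfold C, P. rewrite <- rsum_pm. apply rsum_ext. auto. }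
  assert (Hcp : 0 < c) by (destruct Hcge; auto; rewrite <- H in HCe; lra).
  assert (HP : 2 * INR P - INR n > 0) by nra.
  exists s, c. split; [auto|]. split; [auto|]. split.
  { pose proof (sin2_cos2 (th 0%nat)). unfold Rsqr in *. fold s in H. lra. }
  split; [auto|]. split; [auto|]. split.
  { rewrite Hn, mult_INR in HP. simpl (INR 2) in HP.
    apply INR_lt. lra. }
  split. { fold P. rewrite Rmult_assoc, <- HCe. lra. }
  unfold bitf. fold s. simpl.
  destruct (Rlt_dec _ _); split; intros; try nra; try auto; try discriminate.
Qed.

Lemma code_cnt n th : cntl (code n th) = cnt (fun nu => xorb (bitf th) (posb (cos (th nu)))) n.
Proof. reflexivity. Qed.

Lemma code_inj n h q th th' : n = (2 * h)%nat -> (1 <= h)%nat -> Nat.div n 2 = h -> 0 < q ->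
  is_equilibrium n (omega n q) (kvec n) th -> is_equilibrium n (omega n q) (kvec n) th' ->
  code n th = code n th' -> forall nu, (nu < n)%nat -> th nu = th' nu.
Proof.
  intros Hn Hh Hd Hq E E' Hcode.
  destruct (equil_struct n h q th Hn Hh Hd Hq E) as (s & c & Hs & Hc & H1 & Hsin & Hcos & HP & Hq1 & Hb).
  destruct (equil_struct n h q th' Hn Hh Hd Hq E') as (s' & c' & Hs' & Hc' & H1' & Hsin' & Hcos' & HP' & Hq1' & Hb').
  set (p := fun nu => posb (cos (th nu))) in *.
  set (p' := fun nu => posb (cos (th' nu))) in *.
  assert (Hcn := f_equal cntl Hcode). rewrite !code_cnt in Hcn.
  rewrite !cnt_xor in Hcn. fold p p' in Hcn.
  pose proof (cnt_le p n). pose proof (cnt_le p' n).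
  assert (Hbb : bitf th = bitf th').
  { destruct (bitf th), (bitf th'); simpl in Hcn; auto; lia. }
  assert (Hpp : forall nu, (nu < n)%nat -> p nu = p' nu).
  { intros nu Hnu. assert (X := f_equal (fun l => nth nu l false) Hcode). simpl in X.
    unfold code in X. rewrite !nth_map_seq in X by auto. rewrite Hbb in X.
    unfold p, p'. destruct (bitf th'), (posb (cos (th nu))), (posb (cos (th' nu))); auto. }
  assert (Hcc : cnt p n = cnt p' n) by (apply cnt_ext; auto).
  fold p in Hq1. fold p' in Hq1'. rewrite <- Hcc in Hq1'.
  assert (HD : 0 < 2 * INR (cnt p n) - INR n).
  { assert (INR n = 2 * INR h) by (rewrite Hn, mult_INR; simpl; lra). apply lt_INR in HP. lra. }
  assert (Hsc : s * c = s' * c').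
  { apply (Rmult_eq_reg_r (2 * INR (cnt p n) - INR n)); lra. }
  assert (Hsc2 : s = s' /\ c = c').
  { apply sc_unique; auto. rewrite <- Hb, <- Hb', Hbb. tauto. }
  destruct Hsc2 as [<- <-].
  intros nu Hnu. destruct E as [Hr _]. destruct E' as [Hr' _].
  apply angle_eq; auto.
  - rewrite Hsin, Hsin'; auto.
  - rewrite Hcos, Hcos'; auto. specialize (Hpp nu Hnu). unfold p, p' in Hpp. rewrite Hpp; auto.
Qed.

Lemma upper n q : (2 <= n)%nat -> Nat.Even n -> 0 < q ->
  forall (m : nat) (F : nat -> nat -> R),
    distinct_equilibria n (omega n q) (kvec n) m F ->
    (m <= 2 ^ n - binom n (Nat.div n 2))%nat.
Proof.
  intros Hn2 [h Hh] Hq m F [HE HD].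
  assert (Hd : Nat.div n 2 = h) by (subst; rewrite Nat.mul_comm, Nat.div_mul; lia).
  rewrite Hd. assert (H1h : (1 <= h)%nat) by lia.
  set (L := map (fun j => code n (F j)) (seq 0 m)).
  set (T := filter (fun l => negb (Nat.eqb (cntl l) h)) (all_lists n)).
  assert (HT : length T = (2 ^ n - binom n h)%nat).
  { pose proof (filter_compl _ (fun l => Nat.eqb (cntl l) h) (all_lists n)).
    rewrite count_all_lists, all_lists_len in H. unfold T. lia. }
  rewrite <- HT.
  replace m with (length L) by (unfold L; rewrite length_map, length_seq; auto).
  apply NoDup_incl_length.
  - apply NoDup_map_NoDup_ForallPairs; [|apply seq_NoDup].
    intros a b Ha Hb Hab. apply in_seq in Ha, Hb.
    destruct (Nat.eq_dec a b); auto. exfalso.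
    destruct (HD a b ltac:(lia) ltac:(lia) n0) as [nu [Hnu Hne]].
    apply Hne. eapply code_inj; eauto; apply HE; lia.
  - intros l Hl. unfold L in Hl. apply in_map_iff in Hl. destruct Hl as [j [<- Hj]].
    apply in_seq in Hj. unfold T. apply filter_In. split.
    + apply in_all_lists. unfold code. rewrite length_map, length_seq. auto.
    + destruct (equil_struct n h q (F j) Hh H1h Hd Hq (HE j ltac:(lia))) as (s & c & _ & _ & _ & _ & _ & HP & _).
      rewrite code_cnt, cnt_xor. pose proof (cnt_le (fun nu => posb (cos (F j nu))) n).
      apply Bool.negb_true_iff, Nat.eqb_neq. destruct (bitf (F j)); lia.
Qed.

Definition mkbit h (b : list bool) := Nat.ltb (cntl b) h.
Definition mkp h (b : list bool) nu := xorb (mkbit h b) (nth nu b false).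
Definition mkd n h b := 2 * INR (cnt (mkp h b) n) - INR n.
Definition mkal n h q b :=
  let beta := asin (2 * q / mkd n h b) in if mkbit h b then PI/2 - beta/2 else beta/2.
Definition mk n h q b nu :=
  let al := mkal n h q b in
  if mkp h b nu then (if Nat.ltb nu h then al else - al)
  else (if Nat.ltb nu h then PI - al else - (PI - al)).

Lemma mk_alpha n h q b : n = (2 * h)%nat -> (1 <= h)%nat -> 0 < q < 1 -> length b = n -> cntl b <> h ->
  (h < cnt (mkp h b) n)%nat /\ 0 < mkal n h q b < PI/2 /\
  sin (mkal n h q b) * cos (mkal n h q b) * mkd n h b = q /\
  (mkbit h b = true -> cos (mkal n h q b) ^ 2 < sin (mkal n h q b) ^ 2) /\
  (mkbit h b = false -> sin (mkal n h q b) ^ 2 < cos (mkal n h q b) ^ 2).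
Proof.
  intros Hn Hh Hq Hlen Hne.
  assert (Hcb : cnt (fun nu => nth nu b false) n = cntl b) by (unfold cnt; rewrite map_nth_seq_self; auto).
  assert (Hle : (cntl b <= n)%nat) by (rewrite <- Hcb; apply cnt_le).
  assert (HP : (h < cnt (mkp h b) n)%nat).
  { unfold mkp. rewrite cnt_xor, Hcb. unfold mkbit. destruct (Nat.ltb (cntl b) h) eqn:E.
    apply Nat.ltb_lt in E; lia. apply Nat.ltb_ge in E; lia. }
  split; auto.
  assert (Hd : 2 <= mkd n h b).
  { unfold mkd. assert (INR n = 2 * INR h) by (rewrite Hn, mult_INR; simpl; lra).
    apply le_INR in HP. rewrite S_INR in HP. lra. }
  unfold mkal. set (d := mkd n h b) in *. set (x := 2 * q / d).
  assert (Hx : x * d = 2 * q) by (unfold x; field; lra).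
  assert (Hx0 : 0 < x) by nra. assert (Hx1 : x < 1) by nra.
  set (beta := asin x).
  assert (Hsb : sin beta = x) by (apply sin_asin; lra).
  pose proof (asin_bound x) as Hbd. fold beta in Hbd.
  pose proof PI_RGT_0.
  assert (Hcb0 : 0 < cos beta).
  { assert (0 <= cos beta) by (apply cos_ge_0; lra).
    destruct H0; auto. pose proof (sin2_cos2 beta). unfold Rsqr in *. rewrite <- H0, Hsb in H1. nra. }
  assert (Hb0 : 0 < beta).
  { destruct (Rlt_dec 0 beta); auto. assert (0 <= sin (- beta)) by (apply sin_ge_0; lra).
    rewrite sin_neg in H0. lra. }
  assert (Hs2 : sin beta = 2 * sin (beta/2) * cos (beta/2)) by (rewrite <- sin_2a; f_equal; field).
  assert (Hc2 : cos beta = cos (beta/2) * cos (beta/2) - sin (beta/2) * sin (beta/2))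
    by (rewrite <- cos_2a; f_equal; field).
  destruct (mkbit h b).
  - rewrite sin_shift, cos_shift. split; [lra|]. split; [nra|]. split; intros; [nra|discriminate].
  - split; [lra|]. split; [nra|]. split; intros; [discriminate|nra].
Qed.

Lemma mk_prop n h q b : n = (2 * h)%nat -> (1 <= h)%nat -> Nat.div n 2 = h -> 0 < q < 1 ->
  length b = n -> cntl b <> h ->
  is_equilibrium n (omega n q) (kvec n) (mk n h q b) /\ code n (mk n h q b) = b.
Proof.
  intros Hn Hh Hdv Hq Hlen Hne.
  destruct (mk_alpha n h q b Hn Hh Hq Hlen Hne) as (HP & Hal & Hprod & Hb1 & Hb2).
  set (al := mkal n h q b) in *. set (d := mkd n h b) in *.
  set (th := mk n h q b).
  pose proof PI_RGT_0.
  set (s := sin al). set (c := cos al).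
  assert (Hs : 0 < s) by (apply sin_gt_0; lra).
  assert (Hc : 0 < c) by (apply cos_gt_0; lra).
  assert (Hsin : forall nu, sin (th nu) = if Nat.ltb nu h then s else - s).
  { intros nu. unfold th, mk. fold al. destruct (mkp h b nu), (Nat.ltb nu h);
    rewrite ?sin_neg, ?sin_PI_x; auto. }
  assert (Hcos : forall nu, cos (th nu) = if mkp h b nu then c else - c).
  { intros nu. unfold th, mk. fold al. destruct (mkp h b nu), (Nat.ltb nu h);
    rewrite ?cos_neg, ?Rtrigo_facts.cos_pi_minus; auto. }
  assert (HS : rsum n (fun mu => sin (th mu)) = 0).
  { rewrite (rsum_ext _ _ (fun mu => if Nat.ltb mu h then s else - s)) by auto.
    rewrite rsum_pm, cnt_lt. replace (Nat.min n h) with h by lia.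
    assert (INR n = 2 * INR h) by (rewrite Hn, mult_INR; simpl; lra). nra. }
  assert (HC : rsum n (fun mu => cos (th mu)) = c * d).
  { rewrite (rsum_ext _ _ (fun mu => if mkp h b mu then c else - c)) by auto.
    rewrite rsum_pm. auto. }
  assert (Hnpos : 0 < INR n) by (apply lt_0_INR; lia).
  assert (E0 : Nat.ltb 0 h = true) by (apply Nat.ltb_lt; lia).
  split.
  - split; [|split; [|split]].
    + intros nu _. unfold th, mk. fold al. destruct (mkp h b nu), (Nat.ltb nu h); lra.
    + intros nu Hnu. rewrite omega_sum, HS, HC, Hsin. unfold omega. rewrite Hdv.
      destruct (Nat.ltb nu h).
      * rewrite <- Hprod. fold s c. field. lra.
      * rewrite <- Hprod. fold s c. field. lra.
    + unfold kvec. rewrite rsum_scal, HS. ring.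
    + unfold kvec. rewrite rsum_scal, HC. assert (0 <= c * d).
      { assert (0 < s * c) by nra. assert (0 < d) by (fold s c in Hprod; nra). nra. }
      nra.
  - assert (Hbit : bitf th = mkbit h b).
    { unfold bitf. rewrite Hsin, Hcos, E0.
      destruct (mkbit h b) eqn:E.
      + specialize (Hb1 eq_refl). destruct (Rlt_dec _ _) as [r|r]; auto.
        exfalso; apply r. destruct (mkp h b 0); fold s c in Hb1; nra.
      + specialize (Hb2 eq_refl). destruct (Rlt_dec _ _) as [r|r]; auto.
        exfalso. destruct (mkp h b 0); fold s c in Hb2; nra. }
    unfold code. rewrite Hbit. transitivity (map (fun nu => nth nu b false) (seq 0 n)); [|apply map_nth_seq_self; auto].
    apply map_ext_in. intros nu _. rewrite Hcos. unfold posb.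
    destruct (mkp h b nu) eqn:E; destruct (Rlt_dec _ _); try lra;
    unfold mkp in E; destruct (mkbit h b), (nth nu b false); simpl in *; auto; discriminate.
Qed.

Lemma code_ext n th th' : (0 < n)%nat -> (forall nu, (nu < n)%nat -> th nu = th' nu) -> code n th = code n th'.
Proof.
  intros Hn H. unfold code, bitf. rewrite (H 0%nat Hn).
  apply map_ext_in. intros nu Hnu. apply in_seq in Hnu. rewrite H by lia. auto.
Qed.

Theorem corollary2 (n : nat) (Hn : (2 <= n)%nat) (Hev : Nat.Even n) :
  (forall q : R, 0 < q ->
     forall (m : nat) (F : nat -> nat -> R),
       distinct_equilibria n (omega n q) (kvec n) m F ->
       (m <= 2 ^ n - binom n (Nat.div n 2))%nat) /\
  (forall q : R, 0 < q < 1 ->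
     exists F : nat -> nat -> R,
       distinct_equilibria n (omega n q) (kvec n) (2 ^ n - binom n (Nat.div n 2))%nat F).
Proof.
  split.
  - intros q Hq. apply upper; auto.
  - intros q Hq. destruct Hev as [h Hh].
    assert (Hd : Nat.div n 2 = h) by (subst; rewrite Nat.mul_comm, Nat.div_mul; lia).
    assert (H1h : (1 <= h)%nat) by lia.
    set (T := filter (fun l => negb (Nat.eqb (cntl l) h)) (all_lists n)).
    assert (HT : length T = (2 ^ n - binom n h)%nat).
    { pose proof (filter_compl _ (fun l => Nat.eqb (cntl l) h) (all_lists n)).
      rewrite count_all_lists, all_lists_len in H. unfold T. lia. }
    rewrite Hd, <- HT.
    assert (Hel : forall j, (j < length T)%nat -> length (nth j T nil) = n /\ cntl (nth j T nil) <> h).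
    { intros j Hj. pose proof (nth_In T nil Hj) as Hin. unfold T in Hin.
      apply filter_In in Hin. destruct Hin as [Hin Hneq]. split.
      apply all_lists_in; auto. apply Bool.negb_true_iff, Nat.eqb_neq in Hneq. auto. }
    exists (fun j => mk n h q (nth j T nil)). split.
    + intros j Hj. destruct (Hel j Hj). apply (mk_prop n h q); auto.
    + intros i j Hi Hj Hij. apply NNPP. intros Hnd.
      assert (Hall : forall nu, (nu < n)%nat -> mk n h q (nth i T nil) nu = mk n h q (nth j T nil) nu).
      { intros nu Hnu. apply NNPP. intros Hne. apply Hnd. exists nu. auto. }
      apply code_ext in Hall; [|lia].
      destruct (Hel i Hi), (Hel j Hj).
      rewrite (proj2 (mk_prop n h q _ Hh H1h Hd Hq H H0)) in Hall.
      rewrite (proj2 (mk_prop n h q _ Hh H1h Hd Hq H1 H2)) in Hall.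
      apply Hij. eapply (proj1 (NoDup_nth T nil)); eauto.
      unfold T. apply NoDup_filter, NoDup_all_lists.
Qed.
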